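(* The infinite word $u_\beta$ has affine factor complexity (i.e. $\mathcal C(n)=an+b$ for all $n\in\mathbb N$ for some constants $a,b$) if and only if every left special factor of $u_\beta$ is a prefix of $u_\beta$.
   Context: $\beta>1$ is a simple Parry number with $d_\beta(1)=t_1\cdots t_m$, $m\ge2$, nonnegative integer digits, $t_1\ge1$, $t_m\ge1$, satisfying the Parry condition ($t_i\cdots t_m0^\omega$ lexicographically strictly smaller than $t_1\cdots t_m0^\omega$ for $2\le i\le m$). $\varphi$ is the substitution on $\mathcal A=\{0,\dots,m-1\}$ with $\varphi(k)=0^{t_{k+1}}(k+1)$ for $0\le k\le m-2$, $\varphi(m-1)=0^{t_m}$, and $u_\beta=\lim_n\varphi^n(0)$ is its fixed point. $\mathcal C(n)$ is the number of factors of $u_\beta$ of length $n$. For a factor $w$, ${\rm Lext}(w)=\{a\in\mathcal A: aw \text{ is a factor}\}$; $w$ is left special if $\#{\rm Lext}(w)\ge2$. *)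

(* Defs.v *)
From mathcomp Require Import all_boot all_order all_algebra.
From mathcomp Require Import boolp.
Set Implicit Arguments. Unset Strict Implicit. Unset Printing Implicit Defensive.

(* Digits d_beta(1) = t_1 ... t_m are given as t : seq nat, t_i = nth 0 t (i-1);
   m = size t.  Letters of the alphabet A = {0,...,m-1} are naturals < m. *)

Definition lex_lt (x y : nat -> nat) : Prop :=
  exists k, (forall j, j < k -> x j = y j) /\ x k < y k.

(* Parry condition: t_i ... t_m 0^omega <lex t_1 ... t_m 0^omega for 2 <= i <= m
   (0-indexed shift d = i-1 ranging over 1..m-1; nth 0 pads with zeros). *)
Definition parry_cond (t : seq nat) : Prop :=
  forall d, 1 <= d < size t ->
    lex_lt (fun j => nth 0 t (d + j)) (fun j => nth 0 t j).

Definition phi (t : seq nat) (k : nat) : seq nat :=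
  if k.+1 < size t then nseq (nth 0 t k) 0 ++ [:: k.+1]
  else nseq (nth 0 t k) 0.

Definition phi_word (t : seq nat) (s : seq nat) : seq nat := flatten (map (phi t) s).

(* u_beta = lim phi^n(0); phi^n(0) is a prefix of phi^{n+1}(0) and has length > n,
   so the i-th letter of the limit is the i-th letter of phi^{i+1}(0). *)
Definition u_beta (t : seq nat) (i : nat) : nat :=
  nth 0 (iter i.+1 (phi_word t) [:: 0]) i.

Definition is_factor (u : nat -> nat) (w : seq nat) : Prop :=
  exists i, w = mkseq (fun j => u (i + j)) (size w).

Definition complexity (t : seq nat) (n : nat) : nat :=
  #|[set w : n.-tuple 'I_(size t) |
      `[< is_factor (u_beta t) (map (@nat_of_ord _) w) >]]|.

Definition Lext (t : seq nat) (w : seq nat) : {set 'I_(size t)} :=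
  [set a : 'I_(size t) | `[< is_factor (u_beta t) (nat_of_ord a :: w) >]].

Definition left_special (t : seq nat) (w : seq nat) : Prop :=
  is_factor (u_beta t) w /\ 2 <= #|Lext t w|.

Definition is_prefix (u : nat -> nat) (w : seq nat) : Prop :=
  w = mkseq u (size w).

(* Main.v *)
Require Import Defs.
From mathcomp Require Import all_boot all_order all_algebra.
From mathcomp Require Import boolp.
From mathcomp Require Import zify.
Set Implicit Arguments. Unset Strict Implicit.


Definition good (t : seq nat) := 2 <= size t /\ 0 < nth 0 t 0 /\ 0 < nth 0 t (size t).-1.
Definition sigm (m k : nat) := if k.+1 < m then k.+1 else 0.
Definition PP t n := iter n (phi_word t) [:: 0].
Definition fac (u : nat -> nat) i n := mkseq (fun j => u (i + j)) n.

Lemma phi_word_cat t s1 s2 : phi_word t (s1 ++ s2) = phi_word t s1 ++ phi_word t s2.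
Proof. by rewrite /phi_word map_cat flatten_cat. Qed.

Lemma phi_word_cons t a s : phi_word t (a :: s) = phi t a ++ phi_word t s.
Proof. by []. Qed.

Lemma phi_size t (G : good t) k : k < size t -> 0 < size (phi t k).
Proof.
case: G => [h2 [h0 hl]] hk; rewrite /phi; case: ifP => h.
  by rewrite size_cat /= addn1.
have -> : k = (size t).-1 by lia.
by rewrite size_nseq.
Qed.

Lemma phi0_size t (G : good t) : 2 <= size (phi t 0).
Proof.
case: G => [h2 [h0 hl]]; rewrite /phi ifT //= size_cat size_nseq /=; lia.
Qed.

Lemma phi_all t k : k < size t -> all (fun x => x < size t) (phi t k).
Proof.
move=> hk; rewrite /phi; case: ifP => h.
  rewrite all_cat; apply/andP; split; last by rewrite /= h.
  apply/allP => x /nseqP [-> _]; lia.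
apply/allP => x /nseqP [-> _]; lia.
Qed.

Lemma phi_rcons t (G : good t) k : k < size t ->
  exists x, phi t k = rcons x (sigm (size t) k).
Proof.
case: G => [h2 [h0 hl]] hk; rewrite /phi /sigm; case: ifP => h.
  by exists (nseq (nth 0 t k) 0); rewrite cats1.
have -> : k = (size t).-1 by lia.
case E: (nth 0 t (size t).-1) => [|n]; first by rewrite E in hl.
by exists (nseq n 0); rewrite -cats1 -[n.+1]addn1 nseqD.
Qed.

Lemma phi_word_all t s : all (fun x => x < size t) s ->
  all (fun x => x < size t) (phi_word t s).
Proof.
elim: s => [|a s IH] //= /andP [ha hs]; rewrite phi_word_cons all_cat.
by rewrite phi_all // IH.
Qed.

Lemma phi_word_size t (G : good t) s : all (fun x => x < size t) s ->
  size s <= size (phi_word t s).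
Proof.
elim: s => [|a s IH] //= /andP [ha hs]; rewrite phi_word_cons size_cat.
have := phi_size G ha; have := IH hs; lia.
Qed.

Lemma PP_all t (G : good t) n : all (fun x => x < size t) (PP t n).
Proof.
case: (G) => [h2 _]; elim: n => [|n IH] /=; first by rewrite andbT; lia.
exact: phi_word_all.
Qed.

Lemma PP_prefix t (G : good t) n : exists s, PP t n.+1 = PP t n ++ s.
Proof.
case: (G) => [h2 [h0 hl]]; elim: n => [|n [s IH]].
  rewrite /= /phi_word /= /phi ifT; last lia.
  case E: (nth 0 t 0) => [|k]; first by rewrite E in h0.
  by exists (nseq k 0 ++ [:: 1]); rewrite cats0.
exists (phi_word t s).
have -> : PP t n.+2 = phi_word t (PP t n.+1) by [].
by rewrite {1}IH phi_word_cat.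
Qed.

Lemma PP_prefix_le t (G : good t) n N : n <= N -> exists s, PP t N = PP t n ++ s.
Proof.
elim: N => [|N IH]; first by rewrite leqn0 => /eqP ->; exists [::]; rewrite cats0.
rewrite leq_eqVlt => /orP [/eqP -> | h]; first by exists [::]; rewrite cats0.
have [s1 E1] := IH h; have [s2 E2] := PP_prefix G N.
by exists (s1 ++ s2); rewrite E2 E1 catA.
Qed.

Lemma PP_head t (G : good t) n : exists s, PP t n = 0 :: s.
Proof. by have [s E] := PP_prefix_le G (leq0n n); exists s. Qed.

Lemma PP_size t (G : good t) n : n < size (PP t n).
Proof.
elim: n => [|n IH] //.
have [s E] := PP_head G n.
have hs : all (fun x => x < size t) s.
  by have := PP_all G n; rewrite E => /andP [].
rewrite /PP iterS -/(PP t n) E phi_word_cons size_cat.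
have := phi0_size G; have := phi_word_size G hs; rewrite E /= in IH; lia.
Qed.

Lemma u_nth t (G : good t) i N : i < size (PP t N) -> u_beta t i = nth 0 (PP t N) i.
Proof.
move=> hi; rewrite /u_beta -/(PP t i.+1).
have [s1 E1] := PP_prefix_le G (leq_maxl N i.+1).
have [s2 E2] := PP_prefix_le G (leq_maxr N i.+1).
have hi' : i < size (PP t i.+1) by apply: ltnW (PP_size G i.+1).
have : nth 0 (PP t (maxn N i.+1)) i = nth 0 (PP t N) i by rewrite E1 nth_cat hi.
by rewrite E2 nth_cat hi'.
Qed.

Lemma u_lt t (G : good t) i : u_beta t i < size t.
Proof.
rewrite (u_nth G (PP_size G i)).
by apply: (allP (PP_all G i)); apply: mem_nth; apply: PP_size.
Qed.

Lemma u0 t (G : good t) : u_beta t 0 = 0.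
Proof. have [s E] := PP_head G 1; by rewrite /u_beta -/(PP t 1) E. Qed.

Lemma size_fac u i n : size (fac u i n) = n.
Proof. by rewrite size_mkseq. Qed.

Lemma pref_take t (G : good t) L N : L <= size (PP t N) ->
  fac (u_beta t) 0 L = take L (PP t N).
Proof.
move=> hL; apply: (@eq_from_nth _ 0); first by rewrite size_fac size_takel.
move=> i; rewrite size_fac => hi.
rewrite nth_mkseq // nth_take // add0n; apply: (u_nth G); lia.
Qed.

Lemma fac_cat u i a b : fac u i (a + b) = fac u i a ++ fac u (i + a) b.
Proof.
rewrite /fac /mkseq iotaD map_cat; congr (_ ++ _).
have -> : iota a b = iota (a + 0) b by rewrite addn0.
rewrite iotaDl -map_comp; apply: eq_map => j /=; by rewrite addnA.
Qed.

Lemma fac_cons u i n : fac u i n.+1 = u i :: fac u i.+1 n.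
Proof. by rewrite -add1n fac_cat /fac /= addn0 addn1. Qed.

Lemma fac_take u i n n' : n <= n' -> take n (fac u i n') = fac u i n.
Proof.
move=> h; rewrite -(subnKC h) fac_cat take_size_cat //; exact: size_fac.
Qed.

Lemma fac_all t (G : good t) i n : all (fun x => x < size t) (fac (u_beta t) i n).
Proof. by apply/allP => x /mapP [j _ ->]; apply: u_lt. Qed.

Lemma fixpt t (G : good t) L :
  phi_word t (fac (u_beta t) 0 L) = fac (u_beta t) 0 (size (phi_word t (fac (u_beta t) 0 L))).
Proof.
have hL := PP_size G L.
rewrite (pref_take G (ltnW hL)).
have E : PP t L.+1 = phi_word t (take L (PP t L)) ++ phi_word t (drop L (PP t L)).
  by rewrite -phi_word_cat cat_take_drop.
rewrite (pref_take (N := L.+1) G); last by rewrite E size_cat leq_addr.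
by rewrite E take_size_cat.
Qed.

Lemma cat_inj (s1 s2 s3 s4 : seq nat) : size s1 = size s2 -> s1 ++ s3 = s2 ++ s4 ->
  s1 = s2 /\ s3 = s4.
Proof. by move=> hs /eqP; rewrite eqseq_cat // => /andP [/eqP -> /eqP ->]. Qed.

Lemma block t (G : good t) k n :
  fac (u_beta t) (size (phi_word t (fac (u_beta t) 0 k))) (size (phi_word t (fac (u_beta t) k n)))
  = phi_word t (fac (u_beta t) k n).
Proof.
have hA := fixpt G k.
have := fixpt G (k + n); rewrite fac_cat add0n phi_word_cat size_cat fac_cat add0n.
rewrite {1}hA.
by move/cat_inj => [] //; rewrite size_fac.
Qed.

Lemma step t (G : good t) k n :
  fac (u_beta t) k.+1 n = fac (u_beta t) 0 n ->
  exists i, k <= i /\ u_beta t i = sigm (size t) (u_beta t k) /\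
    fac (u_beta t) i.+1 (size (phi_word t (fac (u_beta t) 0 n)))
    = fac (u_beta t) 0 (size (phi_word t (fac (u_beta t) 0 n))).
Proof.
move=> H.
have [x hx] := phi_rcons G (u_lt G k).
have B := block G k n.+1.
rewrite fac_cons H phi_word_cons hx -cats1 -catA in B.
have hp : k <= size (phi_word t (fac (u_beta t) 0 k)).
  by have := phi_word_size G (fac_all G 0 k); rewrite size_fac.
move: B.
set p := size (phi_word t (fac (u_beta t) 0 k)) in hp *.
set W := phi_word t (fac (u_beta t) 0 n).
rewrite !size_cat /= fac_cat => /cat_inj [|_]; first by rewrite size_fac.
rewrite fac_cat -cat1s => /cat_inj [|h1 h2]; first by rewrite size_fac.
exists (p + size x); split; first by lia.
split; first by move: h1 => -[]; rewrite addn0.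
rewrite -addn1 h2; exact: fixpt G n.
Qed.

Definition Lp t b n := exists i, u_beta t i = b /\ fac (u_beta t) i.+1 n = fac (u_beta t) 0 n.

Lemma Lp_mono t b n n' : n <= n' -> Lp t b n' -> Lp t b n.
Proof.
move=> h [i [hi hf]]; exists i; split => //.
by rewrite -(fac_take _ _ h) hf fac_take.
Qed.

Lemma Lp_step t (G : good t) b n : Lp t b n -> Lp t (sigm (size t) b) n.
Proof.
move=> [k [hk hf]]; have [i [_ [hi hf']]] := step G hf.
apply: (Lp_mono (n' := size (phi_word t (fac (u_beta t) 0 n)))).
  by have := phi_word_size G (fac_all G 0 n); rewrite size_fac.
by exists i; rewrite hi hk.
Qed.

Lemma Lp_lt t (G : good t) b n : Lp t b n -> b < size t.
Proof. by move=> [i [<- _]]; apply: u_lt. Qed.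

Lemma Lp_grow t (G : good t) b n : 0 < n -> Lp t b n -> Lp t (sigm (size t) b) n.+1.
Proof.
move=> hn [k [hk hf]]; have [i [_ [hi hf']]] := step G hf.
apply: (Lp_mono (n' := size (phi_word t (fac (u_beta t) 0 n)))).
  case: n hn {hf hf'} => [|n] // _.
  rewrite fac_cons u0 // phi_word_cons size_cat.
  have := phi0_size G; have := phi_word_size G (fac_all G 1 n); rewrite size_fac; lia.
by exists i; rewrite hi hk.
Qed.

Lemma occ t (G : good t) j : j < size t -> exists k, u_beta t k = j.
Proof.
elim: j => [|j IH] hj; first by exists 0; apply: u0.
have [k hk] := IH (ltnW hj).
have [i [_ [hi _]]] := @step t G k 0 erefl.
by exists i; rewrite hi hk /sigm hj.
Qed.

Lemma base t (G : good t) : exists b, Lp t b 1.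
Proof.
case: (G) => [h2 _].
have [k hk] := occ G (j := (size t).-1) ltac:(lia).
have hk0 : 0 < k.
  case: k hk => [|k] //; rewrite u0 //; lia.
have [i [hki [hi _]]] := @step t G k 0 erefl.
case: i hki hi => [|i] hki hi; first by lia.
exists (u_beta t i), i; split => //.
rewrite !fac_cons hi hk /sigm ifF ?u0 //; lia.
Qed.

Lemma Lp_some t (G : good t) n : exists b, Lp t b n.
Proof.
suff H : forall k, exists b, Lp t b k.+1.
  by have [b hb] := H n; exists b; apply: (Lp_mono (leqnSn n)).
elim => [|k [b hb]]; first exact: base.
by exists (sigm (size t) b); apply: Lp_grow.
Qed.

Lemma sig_iter m a j : 0 < m -> a < m -> iter j (sigm m) a = (a + j) %% m.
Proof.
move=> hm ha; elim: j => [|j IH]; first by rewrite addn0 modn_small.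
rewrite iterS IH /sigm addnS.
have hlt : (a + j) %% m < m by rewrite ltn_mod.
have E : (a + j).+1 %% m = ((a + j) %% m).+1 %% m by rewrite -(addn1 (a + j)) -(addn1 ((a + j) %% m)) modnDml.
rewrite E; move: ((a + j) %% m) hlt => r hr.
case: ifP => h; first by rewrite modn_small.
have -> : r.+1 = m by lia.
by rewrite modnn.
Qed.

Lemma Lp_iter t (G : good t) b n j : Lp t b n -> Lp t (iter j (sigm (size t)) b) n.
Proof. by move=> h; elim: j => [|j IH] //; rewrite iterS; apply: Lp_step. Qed.

Lemma Lp_all t (G : good t) b n : b < size t -> Lp t b n.
Proof.
move=> hb; have [a ha] := Lp_some G n.
have hat := Lp_lt G ha.
have := Lp_iter G (b + size t - a) ha.
rewrite sig_iter //; last by lia.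
have -> : a + (b + size t - a) = b + size t by lia.
by rewrite modnDr modn_small.
Qed.

Lemma fac_lext t (G : good t) b n : b < size t -> is_factor (u_beta t) (b :: fac (u_beta t) 0 n).
Proof.
move=> hb; have [i [hi hf]] := Lp_all G n hb.
exists i; change (b :: fac (u_beta t) 0 n = fac (u_beta t) i (size (fac (u_beta t) 0 n)).+1).
by rewrite size_fac fac_cons hi hf.
Qed.

Lemma left_ext t (G : good t) w : is_factor (u_beta t) w ->
  exists a, a < size t /\ is_factor (u_beta t) (a :: w).
Proof.
case: (G) => [h2 _] [[|i] hw].
  exists 0; split; first by lia.
  by rewrite hw; apply: (fac_lext G); lia.
exists (u_beta t i); split; first exact: (u_lt G).
exists i; change (u_beta t i :: w = fac (u_beta t) i (size w).+1).
by rewrite fac_cons {1}hw.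
Qed.

Lemma factor_tail t a w : is_factor (u_beta t) (a :: w) -> is_factor (u_beta t) w.
Proof.
move=> [i]; change (a :: w = fac (u_beta t) i (size w).+1 -> is_factor (u_beta t) w).
rewrite fac_cons => -[_ hw].
by exists i.+1.
Qed.

Lemma factor_all t (G : good t) w : is_factor (u_beta t) w -> all (fun x => x < size t) w.
Proof. by move=> [i ->]; apply: fac_all. Qed.


Lemma cplx_sum t n : complexity t n =
  \sum_(w : n.-tuple 'I_(size t)) `[< is_factor (u_beta t) (map (@nat_of_ord _) w) >].
Proof.
rewrite /complexity -sum1_card big_mkcond /=; apply: eq_bigr => w _.
by rewrite inE; case: (asbool _).
Qed.

Lemma lext_sum t w : #|Lext t w| =
  \sum_(a : 'I_(size t)) `[< is_factor (u_beta t) (nat_of_ord a :: w) >].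
Proof.
rewrite /Lext -sum1_card big_mkcond /=; apply: eq_bigr => a _.
by rewrite inE; case: (asbool _).
Qed.

Lemma cplx_succ t n : complexity t n.+1 =
  \sum_(w : n.-tuple 'I_(size t)) #|Lext t (map (@nat_of_ord _) w)|.
Proof.
rewrite cplx_sum; under [RHS]eq_bigr => w _ do rewrite lext_sum.
rewrite exchange_big pair_big /=.
rewrite (reindex (fun p : 'I_(size t) * n.-tuple 'I_(size t) => [tuple of p.1 :: p.2])) /=.
  by [].
apply: onW_bij.
exists (fun w : n.+1.-tuple 'I_(size t) => (thead w, [tuple of behead w])).
  move=> [a w] /=; rewrite theadE; congr (_, _); exact: val_inj.
by move=> w; rewrite [RHS]tuple_eta.
Qed.

Definition ind t (w : seq nat) : nat := `[< is_factor (u_beta t) w >].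

Lemma ind_le t (G : good t) w : ind t w <= #|Lext t w|.
Proof.
rewrite /ind; case: asboolP => // hf.
have [a [ha hfa]] := left_ext G hf.
rewrite card_gt0; apply/set0Pn; exists (Ordinal ha); rewrite inE.
exact/asboolP.
Qed.

Lemma lext_factor t w : 0 < #|Lext t w| -> is_factor (u_beta t) w.
Proof.
rewrite card_gt0 => /set0Pn [a]; rewrite inE => /asboolP; exact: factor_tail.
Qed.

Definition D t n (w : n.-tuple 'I_(size t)) :=
  #|Lext t (map (@nat_of_ord _) w)| - ind t (map (@nat_of_ord _) w).

Lemma rec_eq t (G : good t) n : complexity t n.+1 =
  complexity t n + \sum_(w : n.-tuple 'I_(size t)) D w.
Proof.
rewrite cplx_succ cplx_sum -big_split /=; apply: eq_bigr => w _.
by rewrite /D subnKC //; apply: ind_le.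
Qed.

Lemma D_LS t (G : good t) n (w : n.-tuple 'I_(size t)) :
  (0 < D w) <-> left_special t (map (@nat_of_ord _) w).
Proof.
rewrite /D /left_special /ind; split.
  move=> h; have hf : is_factor (u_beta t) (map (@nat_of_ord _) w).
    by apply: lext_factor; lia.
  split => //; move: h; case: asboolP => //; lia.
move=> [hf hl]; case: asboolP => // _; lia.
Qed.

Lemma tuple_of_seq m (s : seq nat) : all (fun x => x < m) s ->
  exists w : (size s).-tuple 'I_m, map (@nat_of_ord _) w = s.
Proof.
elim: s => [|x s IH] /=; first by exists [tuple].
move=> /andP [hx hs]; have [w hw] := IH hs.
by exists [tuple of Ordinal hx :: w]; rewrite /= hw.
Qed.

Lemma lext_prefix t (G : good t) n : #|Lext t (fac (u_beta t) 0 n)| = size t.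
Proof.
have -> : Lext t (fac (u_beta t) 0 n) = setT.
  apply/setP => a; rewrite !inE; apply/asboolP; exact: fac_lext.
by rewrite cardsT card_ord.
Qed.

Lemma prefix_tuple t (G : good t) n : exists w0 : n.-tuple 'I_(size t),
  map (@nat_of_ord _) w0 = fac (u_beta t) 0 n /\ D w0 = (size t).-1.
Proof.
have : exists w0 : n.-tuple 'I_(size t), map (@nat_of_ord _) w0 = fac (u_beta t) 0 n.
  have := tuple_of_seq (fac_all G 0 n); rewrite size_fac; exact.
move=> [w hw]; exists w; split => //.
rewrite /D hw lext_prefix // /ind; case: asboolP => [_|[]]; first by rewrite subn1.
by exists 0; rewrite size_fac.
Qed.

Lemma tuple_of_seqn m n (s : seq nat) : size s = n -> all (fun x => x < m) s ->
  exists w : n.-tuple 'I_m, map (@nat_of_ord _) w = s.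
Proof. move=> <-; exact: tuple_of_seq. Qed.
Unset Implicit Arguments. Set Strict Implicit.
Import GRing.Theory Num.Theory.
Local Open Scope ring_scope.


Theorem proposition3 (t : seq nat)
  (hm : (2 <= size t)%N)
  (ht1 : (1 <= head 0%N t)%N)
  (htm : (1 <= last 0%N t)%N)
  (hparry : parry_cond t) :
  (exists a b : int, forall n : nat, (complexity t n)%:Z = a * n%:Z + b)
  <-> (forall w : seq nat, left_special t w -> is_prefix (u_beta t) w).
Proof.
have G : good t.
  split => //; split; first by rewrite nth0. by rewrite nth_last.
have HS0 : (\sum_(w : 0.-tuple 'I_(size t)) D w = (size t).-1)%N.
  have [w0 [_ hD]] := prefix_tuple G 0.
  rewrite (bigD1 w0) //= big1 ?addn0 // => w hw.
  by move: hw; rewrite (tuple0 w) (tuple0 w0) eqxx.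
split.
- move=> [a [b H]] w [hf hl].
  rewrite /is_prefix; case: (eqVneq w (mkseq (u_beta t) (size w))) => // hne; exfalso.
  have hSn : forall k, (\sum_(w : k.-tuple 'I_(size t)) D w)%:Z = a.
    move=> k; have h1 := H k.+1; rewrite (rec_eq G) PoszD (H k) in h1.
    move: h1; rewrite -addn1 PoszD mulrDr mulr1; lia.
  have Heq : (\sum_(w0 : (size w).-tuple 'I_(size t)) D w0 = (size t).-1)%N.
    have h1 := hSn (size w); have h2 := hSn 0%N; rewrite HS0 in h2.
    have : Posz (\sum_(w0 : (size w).-tuple 'I_(size t)) D w0) = Posz (size t).-1.
      by rewrite h1 h2.
    by case.
  have [wt hwt] := tuple_of_seqn (erefl (size w)) (factor_all G hf).
  have [w0 [hw0 hD0]] := prefix_tuple G (size w).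
  have hne' : wt != w0.
    apply/eqP => E; move/eqP: hne; apply.
    by rewrite -{1}hwt E hw0.
  have hDt : (0 < D wt)%N by apply/(D_LS G); rewrite hwt.
  have : ((size t).-1 < \sum_(w0 : (size w).-tuple 'I_(size t)) D w0)%N.
    rewrite (bigD1 w0) //= (bigD1 wt) /=; last by rewrite hne'.
    rewrite hD0; lia.
  by rewrite Heq ltnn.
- move=> HLS.
  have HSn : forall n, (\sum_(w : n.-tuple 'I_(size t)) D w = (size t).-1)%N.
    move=> n; have [w0 [hw0 hD0]] := prefix_tuple G n.
    rewrite (bigD1 w0) //= big1 ?addn0 // => w hw.
    case: (posnP (D w)) => // hpos.
    have hp := HLS _ ((D_LS G w).1 hpos); exfalso; move/eqP: hw; apply.
    have E : map (@nat_of_ord _) w = map (@nat_of_ord _) w0.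
      by rewrite hw0 hp size_map size_tuple.
    apply: val_inj; move: E; apply: inj_map; exact: val_inj.
  have Hc : forall n, complexity t n = ((size t).-1 * n + 1)%N.
    elim => [|n IH].
      rewrite cplx_sum (bigD1 [tuple]) //= big1 => [|w hw].
        rewrite addn0 muln0 add0n; case: (asboolP (is_factor (u_beta t) [::])) => // -[]; by exists 0%N.
      by exfalso; move/eqP: hw; apply; apply: tuple0.
    rewrite (rec_eq G) IH HSn mulnS; lia.
  exists (Posz (size t).-1), 1 => n; by rewrite Hc PoszD PoszM.
Qed.
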